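(* Let $\mathbb F_q$ be a finite field with $q>2$ elements and let $\mathbb F_q^*=\mathbb F_q\setminus\{0\}$. In the integral group ring $\mathbb Z[\mathrm{SL}_2(\mathbb F_q)]$ consider the seven elements $$A=\left(\begin{array}{cc}\mathbb F_q^*&0\\0&\mathbb F_q^*\end{array}\right),\ B=\left(\begin{array}{cc}0&\mathbb F_q^*\\\mathbb F_q^*&0\end{array}\right),\ C=\left(\begin{array}{cc}\mathbb F_q^*&\mathbb F_q^*\\\mathbb F_q^*&\mathbb F_q^*\end{array}\right),$$ $$D_+=\left(\begin{array}{cc}\mathbb F_q^*&\mathbb F_q^*\\0&\mathbb F_q^*\end{array}\right),\ D_-=\left(\begin{array}{cc}\mathbb F_q^*&0\\\mathbb F_q^*&\mathbb F_q^*\end{array}\right),\ E_+=\left(\begin{array}{cc}\mathbb F_q^*&\mathbb F_q^*\\\mathbb F_q^*&0\end{array}\right),\ E_-=\left(\begin{array}{cc}0&\mathbb F_q^*\\\mathbb F_q^*&\mathbb F_q^*\end{array}\right)$$ (notation explained in the context). Then the $\mathbb Z$-module $$\mathcal{SC}=\mathbb Z A+\mathbb Z B+\mathbb ZC+\mathbb ZD_++\mathbb ZD_-+\mathbb Z E_++\mathbb Z E_-$$ is a subring of $\mathbb Z[\mathrm{SL}_2(\mathbb F_q)]$, i.e. it is closed under the multiplication of the group ring (the product of any two of the seven elements is an integral linear combination of the seven elements).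
   Context: For subsets $\mathcal A,\mathcal B,\mathcal C,\mathcal D$ of $\mathbb F_q$, the symbol $\left(\begin{array}{cc}\mathcal A&\mathcal B\\\mathcal C&\mathcal D\end{array}\right)$ denotes the element $\sum \left(\begin{array}{cc}a&b\\c&d\end{array}\right)$ of $\mathbb Z[\mathrm{SL}_2(\mathbb F_q)]$, where the sum runs over all $(a,b,c,d)\in\mathcal A\times\mathcal B\times\mathcal C\times\mathcal D$ with $ad-bc=1$; an entry $0$ stands for the singleton $\{0\}$. Thus the seven elements are the sums of all matrices of $\mathrm{SL}_2(\mathbb F_q)$ having a prescribed support (set of positions of nonzero entries). The ring $\mathcal{SC}$ need not contain the identity element of the group ring. *)

(* Defs.v *)
From mathcomp Require Import all_boot all_order all_algebra all_field.
Set Implicit Arguments. Unset Strict Implicit. Unset Printing Implicit Defensive.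
Import GRing.Theory.
Local Open Scope ring_scope.

(* The group ring Z[SL_2(F)] is modelled as integer-valued functions on
   2x2 matrices over F that vanish off SL_2(F) = {m | det m = 1};
   the group ring product is convolution over SL_2(F). *)

Definition inSL2 (F : finFieldType) (m : 'M[F]_2) : bool := \det m == 1.

Definition grmul (F : finFieldType) (f g : 'M[F]_2 -> int) : 'M[F]_2 -> int :=
  fun x => \sum_(a : 'M[F]_2 | inSL2 a)
             \sum_(b : 'M[F]_2 | inSL2 b && (a *m b == x)) f a * g b.

Definition entry_ok (F : finFieldType) (nz : bool) (x : F) : bool :=
  if nz then x != 0 else x == 0.

(* sum of all matrices of SL_2(F) with prescribed support
   [[pa, pb], [pc, pd]] (true = nonzero). *)
Definition supp_elt (F : finFieldType) (pa pb pc pd : bool) : 'M[F]_2 -> int :=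
  fun m => (entry_ok pa (m ord0 ord0) && entry_ok pb (m ord0 ord_max) &&
            entry_ok pc (m ord_max ord0) && entry_ok pd (m ord_max ord_max) &&
            inSL2 m)%:Z.

Definition elA  (F : finFieldType) := @supp_elt F true  false false true.
Definition elB  (F : finFieldType) := @supp_elt F false true  true  false.
Definition elC  (F : finFieldType) := @supp_elt F true  true  true  true.
Definition elDp (F : finFieldType) := @supp_elt F true  true  false true.
Definition elDm (F : finFieldType) := @supp_elt F true  false true  true.
Definition elEp (F : finFieldType) := @supp_elt F true  true  true  false.
Definition elEm (F : finFieldType) := @supp_elt F false true  true  true.

Definition inSC (F : finFieldType) (f : 'M[F]_2 -> int) : Prop :=
  exists a b c dp dm ep em : int, forall m : 'M[F]_2,
    f m = a * elA m + b * elB m + c * elC m + dp * elDp m + dm * elDm m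
          + ep * elEp m + em * elEm m.

(* Main.v *)
Require Import Defs.
From mathcomp Require Import all_boot all_order all_algebra all_field.
From mathcomp Require Import ring.
Set Implicit Arguments. Unset Strict Implicit. Unset Printing Implicit Defensive.
Import GRing.Theory.
Local Open Scope ring_scope.

Section S.
Variable F : finFieldType.
Notation M := 'M[F]_2.
Notation i0 := (@ord0 1).
Notation i1 := (@ord_max 1).

Lemma ord2P (i : 'I_2) : i = i0 \/ i = i1.
Proof. case: i => [[|[|//]] H]; [left|right]; exact: val_inj. Qed.

Lemma mul2 (m n : M) i j : (m *m n) i j = m i i0 * n i0 j + m i i1 * n i1 j.
Proof.
rewrite mxE !big_ord_recl big_ord0 addr0.
by have -> : lift i0 (@ord0 0) = i1 :> 'I_2 by apply: val_inj.
Qed.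

Lemma det2 (m : M) : \det m = m i0 i0 * m i1 i1 - m i0 i1 * m i1 i0.
Proof.
rewrite (expand_det_row _ i0) !big_ord_recl big_ord0 addr0 /cofactor !det_mx11 !mxE /=.
have -> : lift i0 (0 : 'I_1) = i1 by apply: val_inj.
have -> : lift i1 (0 : 'I_1) = i0 by apply: val_inj.
by rewrite /bump /= expr0 expr1 !mul1r mulN1r mulrN.
Qed.

Definition mk (a b c d : F) : M :=
  \matrix_(i, j) if i == i0 then (if j == i0 then a else b) else (if j == i0 then c else d).

Lemma mkE a b c d :
  (mk a b c d i0 i0 = a) * (mk a b c d i0 i1 = b) * (mk a b c d i1 i0 = c) * (mk a b c d i1 i1 = d).
Proof. by rewrite !mxE. Qed.

Definition w := mk 0 1 (-1) 0.
Definition winv := mk 0 (-1) 1 0.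

Lemma sl_unit (m : M) : inSL2 m -> m \in unitmx.
Proof. by move=> H; rewrite unitmxE (eqP H) unitr1. Qed.

Lemma mx2_eq (m n : M) :
  m i0 i0 = n i0 i0 -> m i0 i1 = n i0 i1 -> m i1 i0 = n i1 i0 -> m i1 i1 = n i1 i1 -> m = n.
Proof.
move=> h1 h2 h3 h4; apply/matrixP => i j.
by case: (ord2P i) => ->; case: (ord2P j) => ->.
Qed.

Lemma id2E : ((1%:M : M) i0 i0 = 1) * ((1%:M : M) i0 i1 = 0) * ((1%:M : M) i1 i0 = 0) * ((1%:M : M) i1 i1 = 1).
Proof. by rewrite !mxE. Qed.

Lemma w_winv : w *m winv = 1%:M.
Proof. by apply: mx2_eq; rewrite !mul2 !mkE !id2E; ring. Qed.
Lemma winv_w : winv *m w = 1%:M.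
Proof. by apply: mx2_eq; rewrite !mul2 !mkE !id2E; ring. Qed.
Lemma sl_w : inSL2 w.
Proof. by rewrite /inSL2 det2 !mkE; apply/eqP; ring. Qed.
Lemma sl_winv : inSL2 winv.
Proof. by rewrite /inSL2 det2 !mkE; apply/eqP; ring. Qed.

Lemma wlE (m : M) :
  ((winv *m m) i0 i0 = - m i1 i0) * ((winv *m m) i0 i1 = - m i1 i1) *
  ((winv *m m) i1 i0 = m i0 i0) * ((winv *m m) i1 i1 = m i0 i1).
Proof. rewrite !mul2 !mkE; do ! split; ring. Qed.

Lemma wrE (m : M) :
  ((m *m winv) i0 i0 = m i0 i1) * ((m *m winv) i0 i1 = - m i0 i0) *
  ((m *m winv) i1 i0 = m i1 i1) * ((m *m winv) i1 i1 = - m i1 i0).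
Proof. rewrite !mul2 !mkE; do ! split; ring. Qed.

Lemma slM (m n : M) : inSL2 m -> inSL2 (m *m n) = inSL2 n.
Proof. by move=> H; rewrite /inSL2 det_mulmx (eqP H) mul1r. Qed.
Lemma slMr (m n : M) : inSL2 n -> inSL2 (m *m n) = inSL2 m.
Proof. by move=> H; rewrite /inSL2 det_mulmx (eqP H) mulr1. Qed.
Lemma sl_inv (m : M) : inSL2 m -> inSL2 (invmx m).
Proof. by move=> H; rewrite /inSL2 det_inv (eqP H) invr1. Qed.

Lemma invmx_mul (A B : M) : A \in unitmx -> B \in unitmx ->
  invmx (A *m B) = invmx B *m invmx A.
Proof.
move=> HA HB.
have HAB : A *m B \in unitmx by rewrite unitmx_mul HA HB.
rewrite -[RHS]mul1mx -(mulVmx HAB) -!mulmxA.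
by rewrite (mulKVmx HB) (mulmxV HA) mulmx1.
Qed.

Lemma grmul_nf (f g : M -> int) x : grmul f g x =
  if inSL2 x then \sum_(a | inSL2 a) f a * g (invmx a *m x) else 0.
Proof.
rewrite /grmul; case: ifP => Hx.
- apply: eq_bigr => a Ha; rewrite (big_pred1 (invmx a *m x)) // => b /=.
  apply/andP/eqP => [[Hb /eqP <-]| ->]; first by rewrite mulKmx // sl_unit.
  by rewrite slM ?sl_inv // Hx mulKVmx ?sl_unit.
- rewrite big1 // => a Ha; rewrite big_pred0 // => b; apply/negbTE/andP => [[Hb /eqP Hab]].
  by move: Hx; rewrite -Hab slM // Hb.
Qed.

Lemma grmul_ext (f f' g g' : M -> int) x : f =1 f' -> g =1 g' -> grmul f g x = grmul f' g' x.
Proof.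
move=> Hf Hg; rewrite /grmul; apply: eq_bigr => a _; apply: eq_bigr => b _.
by rewrite Hf Hg.
Qed.

Lemma grmul_shl (u ui : M) (f g : M -> int) x :
  ui *m u = 1%:M -> u *m ui = 1%:M -> inSL2 u -> inSL2 ui ->
  grmul (fun m => f (ui *m m)) g x = grmul f g (ui *m x).
Proof.
move=> Hl Hr Hu Hui; rewrite !grmul_nf slM //; case: ifP => // Hx.
have inj : injective (fun m : M => u *m m).
  by move=> m n /(congr1 (mulmx ui)); rewrite !mulmxA Hl !mul1mx.
rewrite (reindex_inj inj) /=; apply: eq_big => a; first by rewrite slM.
move=> Ha; rewrite slM // in Ha; rewrite mulmxA Hl mul1mx invmx_mul ?sl_unit //.
have -> : invmx u = ui.
  by rewrite -[invmx u]mulmx1 -Hr mulmxA mulVmx ?mul1mx ?sl_unit.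
by rewrite mulmxA.
Qed.

Lemma grmul_shr (u ui : M) (f g : M -> int) x :
  ui *m u = 1%:M -> u *m ui = 1%:M -> inSL2 u -> inSL2 ui ->
  grmul f (fun m => g (ui *m m)) x = grmul (fun m => f (m *m ui)) g x.
Proof.
move=> Hl Hr Hu Hui; rewrite !grmul_nf; case: ifP => // Hx.
have inj : injective (fun m : M => m *m u).
  by move=> m n /(congr1 (mulmx^~ ui)); rewrite -!mulmxA Hr !mulmx1.
rewrite [RHS](reindex_inj inj) /=; apply: eq_big => a; first by rewrite slMr.
move=> Ha; rewrite -mulmxA Hr mulmx1 invmx_mul ?sl_unit //.
have -> : invmx u = ui.
  by rewrite -[invmx u]mulmx1 -Hr mulmxA mulVmx ?mul1mx ?sl_unit.
by rewrite mulmxA.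
Qed.

Definition sg (b g : bool) (m : M) : bool :=
  [&& inSL2 m, b ==> (m i0 i1 == 0) & g ==> (m i1 i0 == 0)].
Definition ind b g (m : M) : int := (sg b g m)%:Z.

Lemma sg_sl b g m : sg b g m -> inSL2 m.
Proof. by case/and3P. Qed.

Lemma diag_nz (m : M) : inSL2 m -> (m i0 i1 == 0) || (m i1 i0 == 0) ->
  (m i0 i0 != 0) && (m i1 i1 != 0).
Proof.
rewrite /inSL2 det2 => /eqP Hd /orP [] /eqP E; rewrite E ?mulr0 ?mul0r subr0 in Hd;
  by have := oner_neq0 F; rewrite -Hd mulf_eq0 negb_or.
Qed.

Lemma sg_mul b g m n : sg b g m -> sg b g n -> sg b g (m *m n).
Proof.
case/and3P => Hm Hb1 Hg1 /and3P [Hn Hb2 Hg2]; apply/and3P; split.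
- by rewrite slM.
- apply/implyP => Hb; rewrite mul2 (eqP (implyP Hb1 Hb)) (eqP (implyP Hb2 Hb)).
  by rewrite mulr0 mul0r addr0.
- apply/implyP => Hg; rewrite mul2 (eqP (implyP Hg1 Hg)) (eqP (implyP Hg2 Hg)).
  by rewrite mulr0 mul0r addr0.
Qed.

Lemma sg_inv b g m : sg b g m -> sg b g (invmx m).
Proof.
case/and3P => Hm Hb1 Hg1; apply/and3P; split; first exact: sl_inv.
- apply/implyP => Hb; have E := eqP (implyP Hb1 Hb).
  have := congr1 (fun A : M => A i0 i1) (mulmxV (sl_unit Hm)).
  rewrite /= mul2 E mul0r addr0 id2E => /eqP; rewrite mulf_eq0.
  have /andP [H0 _] := diag_nz Hm (introT orP (or_introl (introT eqP E))).
  by rewrite (negbTE H0).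
- apply/implyP => Hg; have E := eqP (implyP Hg1 Hg).
  have := congr1 (fun A : M => A i1 i0) (mulmxV (sl_unit Hm)).
  rewrite /= mul2 E mul0r add0r id2E => /eqP; rewrite mulf_eq0.
  have /andP [_ H1] := diag_nz Hm (introT orP (or_intror (introT eqP E))).
  by rewrite (negbTE H1).
Qed.

Lemma sg_1 b g : sg b g 1%:M.
Proof. by rewrite /sg /inSL2 det1 eqxx !id2E eqxx !implybT. Qed.

Lemma sg_lmul b g h a : sg b g h -> sg b g (h *m a) = sg b g a.
Proof.
move=> Hh; apply/idP/idP => Ha; last exact: sg_mul.
have Hu := sl_unit (sg_sl Hh).
by rewrite -[a](mulKmx Hu); apply: sg_mul => //; apply: sg_inv.
Qed.

Lemma sg_rmul b g k a : sg b g k -> sg b g (a *m k) = sg b g a.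
Proof.
move=> Hk; apply/idP/idP => Ha; last exact: sg_mul.
have Hu := sl_unit (sg_sl Hk).
by rewrite -[a](mulmxK Hu); apply: sg_mul => //; apply: sg_inv.
Qed.

Lemma sg_invE b g a : sg b g (invmx a) = sg b g a.
Proof.
apply/idP/idP => Ha; last exact: sg_inv.
have Hu : a \in unitmx.
  by rewrite unitmxE -unitrV -det_inv -unitmxE sl_unit // (sg_sl Ha).
by rewrite -(invmxK a); apply: sg_inv.
Qed.

Definition HK b g b' g' (x : M) : bool :=
  [exists h, exists k, [&& sg b g h, sg b' g' k & x == h *m k]].

Lemma grmul_ind b g b' g' x :
  grmul (ind b g) (ind b' g') x =
  (\sum_(a | inSL2 a) ind b g a * ind b' g' (invmx a)) * (HK b g b' g' x)%:Z.
Proof.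
rewrite grmul_nf; case: ifP => Hx; last first.
  case: (boolP (HK _ _ _ _ x)) => [/existsP [h /existsP [k /and3P [Hh Hk /eqP E]]]|HN].
    by move: Hx; rewrite E slM ?(sg_sl Hh) // (sg_sl Hk).
  by rewrite (_ : Posz false = 0) ?mulr0.
case: (boolP (HK _ _ _ _ x)) => [/existsP [h /existsP [k /and3P [Hh Hk /eqP E]]]|HN].
  rewrite mulr1.
  have Hu := sl_unit (sg_sl Hh).
  have inj : injective (fun m : M => h *m m).
    by move=> m n /(congr1 (mulmx (invmx h))); rewrite !mulKmx.
  rewrite (reindex_inj inj) /=; apply: eq_big => a; first by rewrite slM // (sg_sl Hh).
  move=> Ha; rewrite slM ?(sg_sl Hh) // in Ha.
  rewrite /ind sg_lmul // E invmx_mul ?sl_unit ?(sg_sl Hh) //.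
  by rewrite -[_ *m (h *m k)]mulmxA (mulKmx Hu) sg_rmul // sg_invE.
rewrite (_ : Posz false = 0) ?mulr0 // big1 // => a Ha; rewrite /ind.
case: (boolP (sg b g a)) => Hsa; last by rewrite mul0r.
case: (boolP (sg b' g' (invmx a *m x))) => Hsb; last by rewrite mulr0.
case/negP: HN; apply/existsP; exists a; apply/existsP; exists (invmx a *m x).
by apply/and3P; split => //; rewrite mulKVmx ?sl_unit.
Qed.

Lemma conj_ind b g m : ind b g (m *m winv) = ind g b (winv *m m).
Proof.
rewrite /ind /sg !wrE !wlE !oppr_eq0 slMr ?sl_winv // slM ?sl_winv //.
by rewrite [in RHS](andbC (g ==> _)).

Qed.

Definition hkq b g b' g' (x : M) : bool :=
  if [&& b, ~~ g, ~~ b' & g'] then x i0 i0 != 0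
  else if [&& ~~ b, g, b' & ~~ g'] then x i1 i1 != 0
  else ((b && b') ==> (x i0 i1 == 0)) && ((g && g') ==> (x i1 i0 == 0)).

Lemma HKl b g b' g' x : sg b' g' x -> HK b g b' g' x.
Proof.
by move=> H; apply/existsP; exists 1%:M; apply/existsP; exists x; rewrite sg_1 H mul1mx eqxx.
Qed.
Lemma HKr b g b' g' x : sg b g x -> HK b g b' g' x.
Proof.
by move=> H; apply/existsP; exists x; apply/existsP; exists 1%:M; rewrite sg_1 H mulmx1 eqxx.
Qed.

Lemma HK_char b g b' g' x : inSL2 x -> HK b g b' g' x = hkq b g b' g' x.
Proof.
move=> Hx; apply/idP/idP.
  case/existsP=> h /existsP [k /and3P [Hh Hk /eqP E]]; rewrite E.
  case/and3P: Hh => Sh Hb1 Hg1; case/and3P: Hk => Sk Hb2 Hg2.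
  rewrite /hkq; case: ifP => [/and4P [Bb Ng Nb' Gg]| _].
    rewrite mul2 (eqP (implyP Hb1 Bb)) (eqP (implyP Hg2 Gg)) mul0r addr0.
    have /andP [Ha _] := diag_nz Sh (introT orP (or_introl (implyP Hb1 Bb))).
    have /andP [Hb _] := diag_nz Sk (introT orP (or_intror (implyP Hg2 Gg))).
    by rewrite mulf_neq0.
  case: ifP => [/and4P [Nb Gg Bb' Ng'] | _].
    rewrite mul2 (eqP (implyP Hg1 Gg)) (eqP (implyP Hb2 Bb')) mul0r add0r.
    have /andP [_ Ha] := diag_nz Sh (introT orP (or_intror (implyP Hg1 Gg))).
    have /andP [_ Hb] := diag_nz Sk (introT orP (or_introl (implyP Hb2 Bb'))).
    by rewrite mulf_neq0.
  apply/andP; split; apply/implyP => /andP [B1 B2].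
    by rewrite mul2 (eqP (implyP Hb1 B1)) (eqP (implyP Hb2 B2)) mul0r mulr0 addr0.
  by rewrite mul2 (eqP (implyP Hg1 B1)) (eqP (implyP Hg2 B2)) mul0r mulr0 addr0.
have Hdet : x i0 i0 * x i1 i1 - x i0 i1 * x i1 i0 = 1 by rewrite -det2; apply/eqP.
rewrite /hkq; case: ifP => [/and4P [Bb Ng Nb' Gg] Ha| N1].
  rewrite Bb (negbTE Ng) (negbTE Nb') Gg.
  apply/existsP; exists (mk (x i0 i0) 0 (x i1 i0) (x i0 i0)^-1).
  apply/existsP; exists (mk 1 (x i0 i1 / x i0 i0) 0 1).
  apply/and3P; split.
  - by rewrite /sg /inSL2 det2 !mkE /= ?eqxx ?andbT; apply/eqP; field.
  - by rewrite /sg /inSL2 det2 !mkE /= ?eqxx ?andbT; apply/eqP; field.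
  apply/eqP; apply: mx2_eq; rewrite mul2 !mkE; try field => //.
  apply: (mulfI Ha); rewrite mulrDr.
  have -> : x i0 i0 * x i1 i1 = 1 + x i0 i1 * x i1 i0 by rewrite -Hdet; ring.
  by field.
case: ifP => [/and4P [Nb Gg Bb' Ng'] Hd| N2].
  rewrite Bb' (negbTE Ng') (negbTE Nb) Gg.
  apply/existsP; exists (mk (x i1 i1)^-1 (x i0 i1) 0 (x i1 i1)).
  apply/existsP; exists (mk 1 0 (x i1 i0 / x i1 i1) 1).
  apply/and3P; split.
  - by rewrite /sg /inSL2 det2 !mkE /= ?eqxx ?andbT; apply/eqP; field.
  - by rewrite /sg /inSL2 det2 !mkE /= ?eqxx ?andbT; apply/eqP; field.
  apply/eqP; apply: mx2_eq; rewrite mul2 !mkE; try field => //.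
  apply: (mulfI Hd); rewrite mulrDr.
  have -> : x i1 i1 * x i0 i0 = 1 + x i0 i1 * x i1 i0 by rewrite -Hdet; ring.
  by field.
move=> Hq.
case: b g b' g' N1 N2 Hq => [] [] [] [] //= _ _ Hq;
  first [ by apply: HKl; rewrite /sg Hx; move: Hq;
            case: (x i0 i1 == 0); case: (x i1 i0 == 0)
        | by apply: HKr; rewrite /sg Hx; move: Hq;
            case: (x i0 i1 == 0); case: (x i1 i0 == 0) ].
Qed.

Definition pat (m : M) := (m i0 i0 == 0, m i0 i1 == 0, m i1 i0 == 0, m i1 i1 == 0).
Definition Vp (h : M -> int) :=
  (forall m, ~~ inSL2 m -> h m = 0) /\
  (forall m m', inSL2 m -> inSL2 m' -> pat m = pat m' -> h m = h m').

Lemma Vp_ext h h' : (forall m, h m = h' m) -> Vp h -> Vp h'.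
Proof. by move=> E [H1 H2]; split => [m|m m']; rewrite -!E; [apply: H1|apply: H2]. Qed.

Lemma Vp_scale c h : Vp h -> Vp (fun m => c * h m).
Proof. by move=> [H1 H2]; split => [m Hm|m m' Hm Hm' E]; [rewrite H1 ?mulr0 | rewrite (H2 m m')]. Qed.

Lemma Vp_sh h : Vp h -> Vp (fun m => h (winv *m m)).
Proof.
move=> [H1 H2]; split => [m Hm|m m' Hm Hm' E].
  by apply: H1; rewrite slM // sl_winv.
apply: H2; rewrite ?slM ?sl_winv //.
by move: E; rewrite /pat !wlE !oppr_eq0 => -[-> -> -> ->].
Qed.

Lemma Vp_HK b g b' g' : Vp (fun x => (HK b g b' g' x)%:Z).
Proof.
split => [m Hm|m m' Hm Hm' E].
  case: (boolP (HK _ _ _ _ m)) => // /existsP [h /existsP [k /and3P [Hh Hk /eqP E]]].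
  by move: Hm; rewrite E slM ?(sg_sl Hh) // (sg_sl Hk).
by rewrite !HK_char // /hkq; move: E; rewrite /pat => -[-> -> -> ->].
Qed.

Definition gen (i : bool * bool * bool) : M -> int :=
  fun m => if i.1.1 then ind i.1.2 i.2 (winv *m m) else ind i.1.2 i.2 m.

Definition baseN b g b' g' : M -> int :=
  fun x => (\sum_(a | inSL2 a) ind b g a * ind b' g' (invmx a)) * (HK b g b' g' x)%:Z.

Lemma Vp_base b g b' g' : Vp (baseN b g b' g').
Proof. exact: Vp_scale (Vp_HK _ _ _ _). Qed.

Lemma Vp_gen_mul i j : Vp (grmul (gen i) (gen j)).
Proof.
case: i => [[s b] g]; case: j => [[t b'] g']; case: s; case: t.
- apply: (Vp_ext (h := fun x => baseN g b b' g' (winv *m (winv *m x)))); last first.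
    exact: Vp_sh (Vp_sh (Vp_base _ _ _ _)).
  move=> x; rewrite /gen /=.
  rewrite (grmul_shr _ _ _ winv_w w_winv sl_w sl_winv).
  rewrite (grmul_ext (f' := fun m => ind g b (winv *m (winv *m m))) (g' := ind b' g')) //;
    last by move=> m; rewrite mulmxA conj_ind.
  rewrite (grmul_shl (fun m => ind g b (winv *m m)) _ _ winv_w w_winv sl_w sl_winv).
  rewrite (grmul_shl (ind g b) _ _ winv_w w_winv sl_w sl_winv).
  by rewrite grmul_ind.
- apply: (Vp_ext (h := fun x => baseN b g b' g' (winv *m x))); last first.
    exact: Vp_sh (Vp_base _ _ _ _).
  move=> x; rewrite /gen /=.
  rewrite (grmul_shl (ind b g) _ _ winv_w w_winv sl_w sl_winv).
  by rewrite grmul_ind.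
- apply: (Vp_ext (h := fun x => baseN g b b' g' (winv *m x))); last first.
    exact: Vp_sh (Vp_base _ _ _ _).
  move=> x; rewrite /gen /=.
  rewrite (grmul_shr _ _ _ winv_w w_winv sl_w sl_winv).
  rewrite (grmul_ext (f' := fun m => ind g b (winv *m m)) (g' := ind b' g')) //;
    last by move=> m; rewrite conj_ind.
  rewrite (grmul_shl (ind g b) _ _ winv_w w_winv sl_w sl_winv).
  by rewrite grmul_ind.
- apply: (Vp_ext (h := baseN b g b' g')); last exact: Vp_base.
  move=> x; rewrite /gen /=.
  by rewrite grmul_ind.
Qed.

Definition Sp (f : M -> int) :=
  exists c : bool * bool * bool -> int, forall m, f m = \sum_i c i * gen i m.

Lemma bilin f g c d x :
  (forall m, f m = \sum_i c i * gen i m) -> (forall m, g m = \sum_j d j * gen j m) ->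
  grmul f g x = \sum_i \sum_j c i * d j * grmul (gen i) (gen j) x.
Proof.
move=> Hf Hg; rewrite /grmul.
under eq_bigr do under eq_bigr do rewrite Hf Hg mulr_suml.
under eq_bigr do under eq_bigr do under eq_bigr do rewrite mulr_sumr.
under eq_bigr do rewrite exchange_big.
rewrite exchange_big; apply: eq_bigr => i _.
under eq_bigr do rewrite exchange_big.
rewrite exchange_big; apply: eq_bigr => j _.
rewrite mulr_sumr; apply: eq_bigr => a _.
rewrite mulr_sumr; apply: eq_bigr => b _.
by rewrite mulrACA.
Qed.

Lemma Vp_Sp f g : Sp f -> Sp g -> Vp (grmul f g).
Proof.
move=> [c Hf] [d Hg]; split => [m Hm | m m' Hm Hm' E].
  rewrite (bilin _ Hf Hg) big1 // => i _; rewrite big1 // => j _.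
  by have [H1 _] := Vp_gen_mul i j; rewrite H1 // mulr0.
rewrite !(bilin _ Hf Hg); apply: eq_bigr => i _; apply: eq_bigr => j _.
by have [_ H2] := Vp_gen_mul i j; rewrite (H2 m m').
Qed.

Lemma Sp_ext f f' : (forall m, f m = f' m) -> Sp f -> Sp f'.
Proof. by move=> E [c H]; exists c => m; rewrite -E. Qed.

Lemma Sp_gen j : Sp (gen j).
Proof.
exists (fun i => (i == j)%:Z) => m; rewrite (bigD1 j) //= eqxx mul1r big1 ?addr0 //.
by move=> i /negbTE ->; rewrite mul0r.
Qed.

Lemma Sp_add f f' : Sp f -> Sp f' -> Sp (fun m => f m + f' m).
Proof.
move=> [c H] [c' H']; exists (fun i => c i + c' i) => m.
by rewrite H H' -big_split; apply: eq_bigr => i _; rewrite mulrDl.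
Qed.

Lemma Sp_scale k f : Sp f -> Sp (fun m => k * f m).
Proof.
move=> [c H]; exists (fun i => k * c i) => m.
by rewrite H mulr_sumr; apply: eq_bigr => i _; rewrite mulrA.
Qed.

Lemma sl_wl m : inSL2 (winv *m m) = inSL2 m.
Proof. by rewrite slM // sl_winv. Qed.

Lemma sl_pat (m : M) : inSL2 m -> ~~ [|| (m i0 i0 == 0) && (m i0 i1 == 0),
   (m i0 i0 == 0) && (m i1 i0 == 0), (m i1 i1 == 0) && (m i0 i1 == 0)
 | (m i1 i1 == 0) && (m i1 i0 == 0)].
Proof.
rewrite /inSL2 det2 => /eqP H; apply/negP; case/or4P => /andP [/eqP E1 /eqP E2];
  by move: H; rewrite E1 E2 ?mul0r ?mulr0 subrr => /eqP; rewrite eq_sym oner_eq0.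
Qed.

Ltac brute m :=
  unfold elA, elB, elC, elDp, elDm, elEp, elEm, supp_elt, gen, ind, sg, entry_ok;
  rewrite /= ?wlE ?oppr_eq0 ?sl_wl;
  move: (@sl_pat m);
  case: (m i0 i0 == 0); case: (m i0 i1 == 0); case: (m i1 i0 == 0);
  case: (m i1 i1 == 0); case: (inSL2 m) => /=;
  first [ move=> /(_ isT) /=; discriminate | move=> _ ]; try done.

Lemma Sp_A : Sp (@elA F).
Proof. apply: (Sp_ext _ (Sp_gen (false, true, true))) => m; brute m. Qed.

Lemma Sp_B : Sp (@elB F).
Proof. apply: (Sp_ext _ (Sp_gen (true, true, true))) => m; brute m. Qed.

Lemma Sp_diff j1 j2 : Sp (fun m => gen j1 m + (-1) * gen j2 m).
Proof. exact: Sp_add (Sp_gen j1) (Sp_scale (-1) (Sp_gen j2)). Qed.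

Lemma Sp_Dp : Sp (@elDp F).
Proof. apply: (Sp_ext _ (Sp_diff (false, false, true) (false, true, true))) => m; brute m. Qed.
Lemma Sp_Dm : Sp (@elDm F).
Proof. apply: (Sp_ext _ (Sp_diff (false, true, false) (false, true, true))) => m; brute m. Qed.
Lemma Sp_Em : Sp (@elEm F).
Proof. apply: (Sp_ext _ (Sp_diff (true, false, true) (true, true, true))) => m; brute m. Qed.
Lemma Sp_Ep : Sp (@elEp F).
Proof. apply: (Sp_ext _ (Sp_diff (true, true, false) (true, true, true))) => m; brute m. Qed.

Lemma Sp_C : Sp (@elC F).
Proof.
have H := Sp_add (Sp_add (Sp_add (Sp_diff (false, false, false) (false, false, true))
             (Sp_diff (false, true, true) (false, true, false)))
           (Sp_diff (true, true, true) (true, false, true)))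
          (Sp_scale (-1) (Sp_gen (true, true, false))).
by apply: (Sp_ext _ H) => m; brute m.
Qed.

Lemma inSC_Sp f : inSC f -> Sp f.
Proof.
move=> [a [b [c [dp [dm [ep [em H]]]]]]].
apply: (Sp_ext (fun m => esym (H m))).
apply: Sp_add (Sp_scale _ Sp_Em).
apply: Sp_add (Sp_scale _ Sp_Ep).
apply: Sp_add (Sp_scale _ Sp_Dm).
apply: Sp_add (Sp_scale _ Sp_Dp).
apply: Sp_add (Sp_scale _ Sp_C).
exact: Sp_add (Sp_scale _ Sp_A) (Sp_scale _ Sp_B).
Qed.

Definition cls pa pb pc pd (m : M) : bool :=
  entry_ok pa (m i0 i0) && entry_ok pb (m i0 i1) && entry_ok pc (m i1 i0) &&
  entry_ok pd (m i1 i1) && inSL2 m.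

Lemma entry_eq p (x : F) : entry_ok p x -> (x == 0) = ~~ p.
Proof. by case: p => /= [/negbTE|/eqP ->] //; rewrite eqxx. Qed.

Lemma cls_pat pa pb pc pd m : cls pa pb pc pd m -> pat m = (~~ pa, ~~ pb, ~~ pc, ~~ pd).
Proof.
case/andP => /andP [/andP [/andP [Ha Hb] Hc] Hd] _.
by rewrite /pat (entry_eq Ha) (entry_eq Hb) (entry_eq Hc) (entry_eq Hd).
Qed.

Lemma Vp_inSC h : Vp h -> inSC h.
Proof.
move=> [H1 H2].
pose coef pa pb pc pd := if [pick m | cls pa pb pc pd m] is Some m then h m else 0.
have coef_eq : forall pa pb pc pd m, cls pa pb pc pd m -> coef pa pb pc pd = h m.
  move=> pa pb pc pd m Hm; rewrite /coef; case: pickP => [m' Hm'|Hn]; last by rewrite Hn in Hm.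
  apply: H2; [ by case/andP: Hm' | by case/andP: Hm | ].
  by rewrite (cls_pat Hm') (cls_pat Hm).
exists (coef true false false true), (coef false true true false), (coef true true true true),
  (coef true true false true), (coef true false true true), (coef true true true false),
  (coef false true true true).
move=> m.
unfold elA, elB, elC, elDp, elDm, elEp, elEm, supp_elt.
case: (boolP (inSL2 m)) => Hm; last first.
  by rewrite H1 // !andbF (_ : Posz false = 0) // !mulr0 !addr0.
rewrite !andbT; move: (sl_pat Hm).
case E1: (m i0 i0 == 0); case E2: (m i0 i1 == 0); case E3: (m i1 i0 == 0);
  case E4: (m i1 i1 == 0); rewrite /entry_ok ?E1 ?E2 ?E3 ?E4 /=;
  first [ discriminate | move=> _ ];
  rewrite (_ : Posz false = 0) // (_ : Posz true = 1) // ?mulr0 ?mulr1 ?addr0 ?add0r;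
  (apply/esym/coef_eq; by rewrite /cls /entry_ok E1 E2 E3 E4 Hm).
Qed.

End S.

Unset Implicit Arguments.
Theorem theorem2p1 (F : finFieldType) (hq : (2 < #|F|)%N)
  (f g : 'M[F]_2 -> int) :
  inSC f -> inSC g -> inSC (grmul f g).
Proof.
move=> Hf Hg; apply: Vp_inSC; apply: Vp_Sp; exact: inSC_Sp.
Qed.
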